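(* Let $n\ge 2$ and let $\Omega$ be a compact subset of $\mathbb{R}^n$. Then $\mathit{Uf}(\mathrm{conv}(\Omega))\subset \mathit{Uf}(\Omega)$, i.e. the minimal unfolded region of the convex hull of $\Omega$ is included in the minimal unfolded region of $\Omega$.
   Context: $\mathrm{conv}(\Omega)$ is the convex hull of $\Omega$; $S^{n-1}$ is the unit sphere in $\mathbb{R}^n$. For $X\subset\mathbb{R}^n$, $v\in S^{n-1}$ and $b\in\mathbb{R}$, put $X^+_{v,b}=X\cap\{x\in\mathbb{R}^n : x\cdot v>b\}$, and let $\mathrm{R}_{v,b}$ be the reflection of $\mathbb{R}^n$ in the hyperplane $\{x : x\cdot v=b\}$. For a bounded $X\subset\mathbb{R}^n$, define $l_X(v)=\inf\{a : \mathrm{R}_{v,c}(X^+_{v,c})\subset X \text{ for every } c\ge a\}$ and the minimal unfolded region $\mathit{Uf}(X)=\bigcap_{v\in S^{n-1}}\{x\in\mathbb{R}^n : x\cdot v\le l_X(v)\}$. *)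

(* Defs.v *)
From HB Require Import structures.
From mathcomp Require Import all_boot all_order all_algebra.
From mathcomp Require Import all_classical all_reals all_analysis.
Set Implicit Arguments. Unset Strict Implicit. Unset Printing Implicit Defensive.
Import Order.TTheory GRing.Theory Num.Theory.
Import numFieldNormedType.Exports.
Local Open Scope classical_set_scope.
Local Open Scope ring_scope.

Section Defs.
Variables (R : realType) (n : nat).
Notation V := 'rV[R]_n.

Definition dotv (x v : V) : R := \sum_(i < n) x ord0 i * v ord0 i.

Definition sphere : set V := [set v | dotv v v = 1].

Definition halfplus (X : set V) (v : V) (b : R) : set V :=
  X `&` [set x | b < dotv x v].

(* reflection in the hyperplane {x . v = b} (v a unit vector) *)
Definition refl (v : V) (b : R) (x : V) : V :=
  x - (2 * (dotv x v - b)) *: v.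

Definition lX (X : set V) (v : V) : \bar R :=
  ereal_inf [set a%:E | a in
     [set a : R | forall c : R, a <= c -> refl v c @` halfplus X v c `<=` X]].

Definition Uf (X : set V) : set V :=
  [set x | forall v, sphere v -> ((dotv x v)%:E <= lX X v)%E].

Definition chull (Om : set V) : set V :=
  [set x | exists k : nat, exists p : 'I_k -> V, exists w : 'I_k -> R,
     [/\ (forall i, Om (p i)), (forall i, 0 <= w i),
         \sum_(i < k) w i = 1 & x = \sum_(i < k) w i *: p i]].

End Defs.

(* Main.v *)
Require Import Defs.
From mathcomp Require Import all_boot all_order all_algebra all_classical all_reals all_analysis.
Import numFieldNormedType.Exports.
Import Order.TTheory GRing.Theory Num.Theory.
Local Open Scope classical_set_scope.
Local Open Scope ring_scope.

Section H.
Variables (R : realType) (n : nat).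
Notation V := 'rV[R]_n.

Lemma dotvD (x y v : V) : dotv (x + y) v = dotv x v + dotv y v.
Proof. rewrite /dotv -big_split /=; apply: eq_bigr => i _; by rewrite mxE mulrDl. Qed.

Lemma dotvZ a (x v : V) : dotv (a *: x) v = a * dotv x v.
Proof. rewrite /dotv mulr_sumr; apply: eq_bigr => i _; by rewrite mxE mulrA. Qed.

Lemma dotvN (x v : V) : dotv (- x) v = - dotv x v.
Proof. by rewrite -scaleN1r dotvZ mulN1r. Qed.

Lemma dotv0 (v : V) : dotv 0 v = 0.
Proof. by rewrite -(scale0r (0:V)) dotvZ mul0r. Qed.

Lemma dotv_sum k (w : 'I_k -> R) (p : 'I_k -> V) v :
  dotv (\sum_(i < k) w i *: p i) v = \sum_(i < k) w i * dotv (p i) v.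
Proof.
elim: k w p => [|k IH] w p; first by rewrite !big_ord0 dotv0.
by rewrite !big_ord_recr /= dotvD dotvZ IH.
Qed.

Lemma chull_conv (Om : set V) x1 x2 (l : R) : 0 <= l -> l <= 1 ->
  chull Om x1 -> chull Om x2 -> chull Om ((1 - l) *: x1 + l *: x2).
Proof.
move=> l0 l1 [k1 [p1 [w1 [Hp1 Hw1 Hs1 ->]]]] [k2 [p2 [w2 [Hp2 Hw2 Hs2 ->]]]].
exists (k1 + k2)%N.
exists (fun i => match fintype.split i with inl a => p1 a | inr b => p2 b end).
exists (fun i => match fintype.split i with inl a => (1 - l) * w1 a | inr b => l * w2 b end).
have sl : forall a : 'I_k1, fintype.split (lshift k2 a) = inl a.
  by move=> a; exact: (unsplitK (inl a)).
have sr : forall b : 'I_k2, fintype.split (rshift k1 b) = inr b.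
  by move=> b; exact: (unsplitK (inr b)).
split.
- by move=> i; case: (fintype.split i).
- move=> i; case: (fintype.split i) => a; apply: mulr_ge0 => //; by rewrite subr_ge0.
- rewrite big_split_ord /=.
  under eq_bigr do rewrite sl.
  under [X in _ + X = _]eq_bigr do rewrite sr.
  by rewrite -!mulr_sumr Hs1 Hs2 !mulr1 subrK.
- rewrite big_split_ord /=.
  under [in RHS]eq_bigr do rewrite sl.
  under [X in _ = _ + X]eq_bigr do rewrite sr.
  rewrite !scaler_sumr; congr (_ + _); apply: eq_bigr => i _; by rewrite scalerA.
Qed.

Lemma key (Om : set V) v c :
  refl v c @` halfplus Om v c `<=` Om ->
  refl v c @` halfplus (chull Om) v c `<=` chull Om.
Proof.
move=> H _ [y [Hy yc] <-].
have Hy' := Hy.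
case: Hy => [k [p [w [Hp Hw Hs Hyd]]]].
pose m i := Num.max 0 (dotv (p i) v - c).
pose G i := p i - (2 * m i) *: v.
have HG : forall i, Om (G i).
  move=> i; rewrite /G; case: (leP (dotv (p i) v - c) 0) => h.
  - have -> : m i = 0 by rewrite /m; apply/max_idPl.
    by rewrite mulr0 scale0r subr0.
  - have -> : m i = dotv (p i) v - c by rewrite /m; apply/max_idPr; exact: ltW.
    apply: H; exists (p i) => //; split => //=.
    by rewrite -subr_gt0.
pose z := \sum_(i < k) w i *: G i.
have Hz : chull Om z by exists k, G, w.
pose T := \sum_(i < k) w i * m i.
pose S := dotv y v - c.
have eS : S = \sum_(i < k) w i * (dotv (p i) v - c).
  rewrite /S Hyd dotv_sum.
  have -> : \sum_(i < k) w i * (dotv (p i) v - c) =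
     \sum_(i < k) w i * dotv (p i) v - (\sum_(i < k) w i) * c.
    by rewrite mulr_suml -sumrB; apply: eq_bigr => i _; rewrite mulrBr.
  by rewrite Hs mul1r.
have S0 : 0 < S by rewrite /S subr_gt0.
have ST : S <= T.
  rewrite eS /T; apply: ler_sum => i _; apply: ler_wpM2l => //.
  by rewrite /m le_max lexx orbT.
have T0 : 0 < T by apply: lt_le_trans ST.
have ez : z = y - (2 * T) *: v.
  rewrite /z /G Hyd /T.
  under eq_bigr do rewrite scalerBr scalerA.
  rewrite sumrB; congr (_ - _).
  rewrite -scaler_suml mulr_sumr; congr (_ *: _); apply: eq_bigr => i _.
  by rewrite mulrCA.
pose l := S / T.
have -> : refl v c y = (1 - l) *: y + l *: z.
  rewrite /refl ez -/S scalerBr scalerA scalerBl scale1r.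
  rewrite addrA subrK; congr (_ - _ *: _).
  rewrite /l mulrCA -mulrA mulVf ?mulr1 //; exact: lt0r_neq0.
apply: chull_conv => //.
- by rewrite /l divr_ge0 // ltW.
- by rewrite /l ler_pdivrMr // mul1r.
Qed.

End H.

Theorem theorem2p4 (R : realType) (n : nat) (Om : set 'rV[R]_n) :
  (2 <= n)%N -> compact Om -> (Uf (chull Om) `<=` Uf Om)%classic.
Proof.
move=> _ _ x Hx v Hv.
apply: (le_trans (Hx v Hv)).
apply: le_ereal_inf => _ [a Ha <-]; exists a => //.
move=> c ac; apply: key; exact: Ha.
Qed.
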